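(* Let $\alpha$ be an $H$-coloring of $G$ and let $C$ be an $\alpha$-tight closed walk in $G$. Then every vertex of $C$ is frozen in $\alpha$.
   Context: All graphs are finite and undirected. $G$ is a connected loopless graph with at least one edge. $H$ is a connected graph with at least one edge, possibly with loops, having the monochromatic neighborhood property: for all $a,b\in V(H)$, $|N_H(a)\cap N_H(b)|\le 1$, where $N_H(a)=\{w: aw\in E(H)\}$. An $H$-coloring of $G$ is a map $\sigma:V(G)\to V(H)$ such that $uv\in E(G)$ implies $\sigma(u)\sigma(v)\in E(H)$. An $H$-recoloring sequence is a sequence $\sigma_0,\dots,\sigma_l$ of $H$-colorings of $G$ in which consecutive colorings differ in the color of exactly one vertex. An oriented edge is an ordered pair $(x,y)$ with $xy$ an edge; $(x,y)^{-1}=(y,x)$. A walk is a sequence of oriented edges in which each starts where the previous ends; it is closed if it ends where it starts. A walk is reduced if no two consecutive edges $e_ie_{i+1}$ satisfy $e_{i+1}=e_i^{-1}$. A nonempty closed walk $e_1\dots e_k$ is cyclically reduced if it is reduced and $e_k\neq e_1^{-1}$. For a walk $W=(x_0,x_1)\dots(x_{k-1},x_k)$ in $G$, $\alpha(W)=(\alpha(x_0),\alpha(x_1))\dots(\alpha(x_{k-1}),\alpha(x_k))$. A closed walk $C$ in $G$ is $\alpha$-tight if $\alpha(C)$ is cyclically reduced. A vertex $v$ is frozen in $\alpha$ if every $H$-recoloring sequence starting at $\alpha$ ends in a coloring $\beta$ with $\beta(v)=\alpha(v)$. *)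

(* Defs.v *)
From mathcomp Require Import all_boot.
Set Implicit Arguments.
Unset Strict Implicit.
Unset Printing Implicit Defensive.

(* A finite undirected graph: vertex finType T with a symmetric relation e. *)
Definition symmetric_rel (T : finType) (e : rel T) := forall x y, e x y = e y x.
Definition loopless (T : finType) (e : rel T) := forall x, ~~ e x x.
Definition connected_graph (T : finType) (e : rel T) := forall x y, connect e x y.
Definition has_edge (T : finType) (e : rel T) := exists x y, e x y.

Definition nbhd (T : finType) (e : rel T) (a : T) : {set T} := [set w | e a w].

Definition mono_nbhd_property (T : finType) (e : rel T) :=
  forall a b, a != b -> #|nbhd e a :&: nbhd e b| <= 1.

Definition is_Hcoloring (V W : finType) (eG : rel V) (eH : rel W) (s : V -> W) :=
  forall u v, eG u v -> eH (s u) (s v).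

Definition differ_in_one (V W : finType) (s t : V -> W) :=
  exists v, s v <> t v /\ forall u, u <> v -> s u = t u.

(* recoloring_seq s l : s :: l is an H-recoloring sequence (starting at s) *)
Fixpoint recoloring_seq (V W : finType) (eG : rel V) (eH : rel W)
  (s : V -> W) (l : seq (V -> W)) : Prop :=
  match l with
  | [::] => is_Hcoloring eG eH s
  | t :: l' => is_Hcoloring eG eH s /\ differ_in_one s t /\ recoloring_seq eG eH t l'
  end.

Definition frozen (V W : finType) (eG : rel V) (eH : rel W) (alpha : V -> W) (v : V) :=
  forall l, recoloring_seq eG eH alpha l -> (last alpha l) v = alpha v.

(* oriented edges are pairs (x, y) with e x y; inverse swaps them *)
Definition oinv (T : Type) (p : T * T) : T * T := (p.2, p.1).

Definition is_walk (T : finType) (e : rel T) (s : seq (T * T)) : bool :=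
  all (fun p => e p.1 p.2) s && sorted (fun p q => p.2 == q.1) s.

Definition is_closed_walk (T : finType) (e : rel T) (s : seq (T * T)) : bool :=
  match s with
  | [::] => false
  | p :: _ => is_walk e s && ((last p s).2 == p.1)
  end.

Definition reduced (T : finType) (s : seq (T * T)) : bool :=
  sorted (fun p q => q != oinv p) s.

Definition cyclically_reduced (T : finType) (s : seq (T * T)) : bool :=
  match s with
  | [::] => false
  | p :: _ => [&& (last p s).2 == p.1, reduced s & last p s != oinv p]
  end.

Definition map_walk (V W : finType) (alpha : V -> W) (s : seq (V * V)) : seq (W * W) :=
  map (fun p => (alpha p.1, alpha p.2)) s.

Definition tight (V W : finType) (eG : rel V) (alpha : V -> W) (C : seq (V * V)) :=
  is_closed_walk eG C && cyclically_reduced (map_walk alpha C).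

Definition vertex_of_walk (T : finType) (x : T) (s : seq (T * T)) : bool :=
  has (fun p => (p.1 == x) || (p.2 == x)) s.

(* Main.v *)
Require Import Defs.
From mathcomp Require Import all_boot.
Set Implicit Arguments.
Unset Strict Implicit.

Lemma pred_path (T : eqType) (r : rel T) x t y :
  path r x t -> y \in t -> exists2 z, z \in x :: t & r z y.
Proof.
elim: t x => [//|a t IH] x /= /andP[rxa pt].
rewrite inE => /orP[/eqP->|yt]; first by exists x; rewrite ?inE ?eqxx.
have [z zt rzy] := IH _ pt yt; exists z => //.
by rewrite inE zt orbT.
Qed.

Lemma succ_path (T : eqType) (r : rel T) x t y :
  path r x t -> y \in belast x t -> exists2 z, z \in t & r y z.
Proof.
elim: t x => [//|a t IH] x /= /andP[rxa pt].
rewrite inE => /orP[/eqP->|yt]; first by exists a; rewrite ?inE ?eqxx.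
have [z zt rzy] := IH _ pt yt; exists z => //.
by rewrite inE zt orbT.
Qed.

Lemma key (V W : finType) (eG : rel V) (alpha : V -> W) (C : seq (V * V)) :
  tight eG alpha C -> forall v, vertex_of_walk v C ->
  exists u w, [/\ vertex_of_walk u C, vertex_of_walk w C, eG u v, eG v w
     & alpha u != alpha w].
Proof.
case: C => [//|c0 cs] + v hv.
rewrite /tight /is_closed_walk /cyclically_reduced /map_walk /reduced /is_walk /=.
set f := (fun p : V * V => (alpha p.1, alpha p.2)).
rewrite last_map path_map.
case/andP => /andP[/andP[/andP[e0 eall] pw] cl] /and3P[_ pr lst].
set R := (fun p q : V * V => (p.2 == q.1) && (f q != oinv (f p))).
have hP : path R c0 (rcons cs c0).
  rewrite rcons_path; apply/andP; split; last first.
    rewrite /R (eqP cl) eqxx /=; apply: contra lst.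
    by rewrite /f /oinv /= => /eqP[-> ->].
  have -> : path R c0 cs = path (fun p q : V * V => p.2 == q.1) c0 cs &&
                          path (relpre f (fun p q => q != oinv p)) c0 cs.
    by rewrite -path_relI.
  by rewrite pw pr.
have inC : forall p, p \in rcons cs c0 -> p \in c0 :: cs.
  by move=> p; rewrite mem_rcons.
have edgeC : forall p, p \in c0 :: cs -> eG p.1 p.2.
  move=> p; rewrite inE => /orP[/eqP->//|pc].
  exact: (allP eall).
have vw : forall x p, p \in c0 :: cs -> (p.1 == x) || (p.2 == x) ->
    vertex_of_walk x (c0 :: cs).
  by move=> x p pC h; apply/hasP; exists p.
have fin : forall y p, R y p -> y.2 = p.1 /\ alpha y.1 != alpha p.2.
  move=> y p /andP[/eqP e1 ne]; split => //.
  apply: contra ne => /eqP h.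
  by rewrite /f /oinv /= -e1 h.
have fin2 : forall y p, y \in c0 :: cs -> p \in c0 :: cs -> R y p ->
   exists u w, [/\ vertex_of_walk u (c0 :: cs), vertex_of_walk w (c0 :: cs),
      eG u y.2, eG y.2 w & alpha u != alpha w].
  move=> y p yC pC /fin [e1 ne].
  exists y.1, p.2; split => //.
  - by apply: (vw _ y) => //; rewrite eqxx.
  - by apply: (vw _ p) => //; rewrite eqxx orbT.
  - exact: edgeC.
  - by rewrite e1; apply: edgeC.
move: hv => /hasP[p pC /orP[/eqP <-|/eqP <-]].
- have pt : p \in rcons cs c0 by rewrite mem_rcons.
  have [y yt Ryp] := pred_path hP pt.
  have yC : y \in c0 :: cs.
    by move: yt; rewrite inE => /orP[/eqP->|/inC //]; rewrite inE eqxx.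
  have [e1 _] := fin _ _ Ryp.
  rewrite -e1; exact: fin2 yC pC Ryp.
- have pb : p \in belast c0 (rcons cs c0) by rewrite belast_rcons.
  have [q qt Rpq] := succ_path hP pb.
  exact: fin2 pC (inC _ qt) Rpq.
Qed.

Lemma step (V W : finType) (eG : rel V) (eH : rel W)
  (H_sym : symmetric_rel eH) (G_loopless : loopless eG)
  (H_mono : mono_nbhd_property eH) (C : seq (V * V)) (s t : V -> W) :
  is_Hcoloring eG eH s -> is_Hcoloring eG eH t -> differ_in_one s t ->
  (forall v, vertex_of_walk v C -> exists u w, [/\ vertex_of_walk u C,
     vertex_of_walk w C, eG u v, eG v w & s u != s w]) ->
  forall v, vertex_of_walk v C -> t v = s v.
Proof.
move=> hs ht [d [nd hd]] P v vC.
case: (v =P d) => [ed|ne]; last by rewrite hd.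
subst v; exfalso.
have [u [w [_ _ eu ew nuw]]] := P d vC.
have ud : u <> d by move=> h; subst u; move: (G_loopless d); rewrite eu.
have wd : w <> d by move=> h; subst w; move: (G_loopless d); rewrite ew.
have tu := hd u ud; have tw := hd w wd.
have sub : [set s d; t d] \subset nbhd eH (s u) :&: nbhd eH (s w).
  apply/subsetP => x; rewrite !inE => /orP[]/eqP->; rewrite ?inE.
  - by rewrite (hs _ _ eu) H_sym (hs _ _ ew).
  - by rewrite tu tw (ht _ _ eu) H_sym (ht _ _ ew).
have := leq_trans (subset_leq_card sub) (H_mono _ _ nuw).
rewrite cards2.
by case: eqP => // h; apply: nd.
Qed.

Theorem mainTheorem4 (V W : finType) (eG : rel V) (eH : rel W)
  (G_sym : symmetric_rel eG) (G_loopless : loopless eG)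
  (G_conn : connected_graph eG) (G_edge : has_edge eG)
  (H_sym : symmetric_rel eH) (H_conn : connected_graph eH) (H_edge : has_edge eH)
  (H_mono : mono_nbhd_property eH)
  (alpha : V -> W) (halpha : is_Hcoloring eG eH alpha)
  (C : seq (V * V)) (hC : tight eG alpha C) :
  forall v : V, vertex_of_walk v C -> frozen eG eH alpha v.
Proof.
move=> v vC l.
have K := key hC.
suff: forall s, (forall x, vertex_of_walk x C -> s x = alpha x) ->
  recoloring_seq eG eH s l -> forall y, vertex_of_walk y C -> last s l y = alpha y.
  by move=> H hl; apply: H.
elim: l => [|t l IH] s hs /=; first by move=> _ y yC; apply: hs.
move=> [hsc [hd hr]] y yC.
have ht : forall x, vertex_of_walk x C -> t x = alpha x.
  move=> x xC; rewrite -(hs x xC).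
  apply: (@step V W eG eH H_sym G_loopless H_mono C s t hsc _ hd _ x xC).
  - by move: hr; case: (l) => [|? ?] //= [].
  - move=> z zC; have [u [w [uC wC e1 e2 ne]]] := K z zC.
    by exists u, w; rewrite (hs u uC) (hs w wC).
exact: (IH t ht hr y yC).
Qed.
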